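(* Let $d\ge 0$ be an integer. There exist an instance domain $\mathcal{X}$ and a hypothesis class $\mathcal{H}$ with Littlestone dimension $\mathrm{Ldim}(\mathcal{H})=d<\infty$ such that the following holds for all integers $k,l\ge 0$: if $k<l+d$, then for any integer $m\ge 0$ there exists a strategy of the adversary, all of whose presented sequences satisfy the $l$-bias assumption with respect to $\mathcal{H}$, that forces any deterministic learning algorithm guaranteeing at most $k$ mistakes (on all sequences satisfying the $l$-bias assumption with respect to $\mathcal{H}$) to have at least $m+1$ nontrivial rounds.
   Context: Online classification with abstention: at each round $t$ the adversary presents $x_t\in\mathcal{X}$, the learner predicts $\hat y_t\in\{-1,+1,\bot\}$ ($\bot$ = abstain), then the adversary reveals $y_t\in\{-1,+1\}$. A mistake is a round with $\hat y_t=-y_t$; a round is nontrivial if the learner makes a mistake or abstains. A deterministic learner's prediction is a deterministic function of the past labeled examples and the current example; the adversary may act adaptively. Hypotheses are maps $\mathcal{X}\to\{-1,+1\}$. For classes, $\mathcal{H}_1\cdot\mathcal{H}_2=\{x\mapsto h_1(x)h_2(x):h_i\in\mathcal{H}_i\}$. $\mathcal{C}^l$ is the class of functions $x\mapsto 1-2I(x\in D)$ for $D\subseteq\mathcal{X}$, $|D|\le l$, and $\mathcal{H}^l=\mathcal{H}\cdot\mathcal{C}^l$. A sequence $(x_1,y_1),\dots,(x_n,y_n)$ satisfies the $l$-bias assumption w.r.t. $\mathcal{H}$ if some $h\in\mathcal{H}^l$ has $h(x_t)=y_t$ for all $t$. The Littlestone dimension $\mathrm{Ldim}(\mathcal{H})$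 is the largest $d$ such that there is a complete binary tree of depth $d$ whose internal nodes are labeled by points of $\mathcal{X}$ such that for every root-to-leaf path (going left means label $-1$, right means $+1$) some $h\in\mathcal{H}$ agrees with all labels along the path. *)

(* Defs.v *)
From Stdlib Require Import List.
From mathcomp Require Import all_boot.
Set Implicit Arguments. Unset Strict Implicit. Unset Printing Implicit Defensive.

(* Labels: [true] encodes +1 and [false] encodes -1.
   Predictions: [Some y] is the label y, [None] is abstention (bot). *)

Section OnlineAbstention.
Variable X : Type.

Definition hyp := X -> bool.
Definition hclass := hyp -> Prop.

(* product of two {-1,+1}-valued values: (+1)(+1)=(-1)(-1)=+1 *)
Definition smul (a b : bool) : bool := a == b.

Inductive ltree : Type :=
| LLeaf : ltree
| LNode : X -> ltree -> ltree -> ltree.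

Fixpoint complete_depth (t : ltree) (d : nat) : Prop :=
  match t with
  | LLeaf => d = 0
  | LNode _ l r => exists n, d = n.+1 /\ complete_depth l n /\ complete_depth r n
  end.

(* Every root-to-leaf path of t (left = label -1, right = label +1) is
   realized by some hypothesis satisfying P. *)
Fixpoint shattered (P : hclass) (t : ltree) : Prop :=
  match t with
  | LLeaf => exists h, P h
  | LNode x l r =>
      shattered (fun h => P h /\ h x = false) l /\
      shattered (fun h => P h /\ h x = true) r
  end.

Definition Ldim (H : hclass) (d : nat) : Prop :=
  (exists t, complete_depth t d /\ shattered H t) /\
  (forall t d', complete_depth t d' -> shattered H t -> d' <= d).

(* C^l : x |-> 1 - 2 I(x in D), |D| <= l (D given by a list of size <= l) *)
Definition Cl (l : nat) : hclass :=
  fun c => exists D : seq X, size D <= l /\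
           forall x, (c x = false <-> In x D).

Definition hprod (H1 H2 : hclass) : hclass :=
  fun f => exists h1 h2, H1 h1 /\ H2 h2 /\ forall x, f x = smul (h1 x) (h2 x).

Definition Hl (H : hclass) (l : nat) : hclass := hprod H (Cl l).

Definition lbias (H : hclass) (l : nat) (s : seq (X * bool)) : Prop :=
  exists h, Hl H l h /\ forall p, In p s -> h p.1 = p.2.

Definition learner := seq (X * bool) -> X -> option bool.

Definition round := (X * option bool * bool)%type.

Definition labeled (h : seq round) : seq (X * bool) :=
  map (fun r => (r.1.1, r.2)) h.

Definition is_mistake (p : option bool) (y : bool) : bool := p == Some (~~ y).
Definition is_nontrivial (p : option bool) (y : bool) : bool :=
  (p == None) || is_mistake p y.

Record adversary := Adversary {
  adv_x : seq round -> X;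
  adv_y : seq round -> X -> option bool -> bool }.

(* A general responder (the prediction may depend on the full history). *)
Definition responder := seq round -> X -> option bool.

Definition learner_resp (L : learner) : responder :=
  fun h x => L (labeled h) x.

Fixpoint play (A : adversary) (R : responder) (n : nat) : seq round :=
  match n with
  | 0 => [::]
  | n.+1 =>
      let h := play A R n in
      let x := adv_x A h in
      let p := R h x in
      rcons h (x, p, adv_y A h x p)
  end.

Definition nontrivial_count (h : seq round) : nat :=
  count (fun r => is_nontrivial r.1.2 r.2) h.

Fixpoint mistakes_aux (L : learner) (past : seq (X * bool)) (s : seq (X * bool))
  : nat :=
  match s with
  | [::] => 0
  | (x, y) :: s' =>
      is_mistake (L past x) y + mistakes_aux L (rcons past (x, y)) s'
  end.

Definition mistakes (L : learner) (s : seq (X * bool)) : nat :=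
  mistakes_aux L [::] s.

Definition mistake_bounded (H : hclass) (l k : nat) (L : learner) : Prop :=
  forall s, lbias H l s -> mistakes L s <= k.

End OnlineAbstention.

(* Main.v *)
From Stdlib Require Import List.
Require Import Defs.
From mathcomp Require Import all_boot zify.

Set Implicit Arguments. Unset Strict Implicit.

Lemma InE (T : eqType) (x : T) (s : seq T) : In x s <-> x \in s.
Proof.
elim: s => [|a s IH] //=; rewrite in_cons; split.
- by case=> [->|/IH ->]; rewrite ?eqxx ?orbT.
- by case/orP=> [/eqP->|/IH]; [left|right].
Qed.

Lemma shat_ne (X : Type) (t : ltree X) (P : hclass X) :
  shattered P t -> exists h, P h.
Proof.
elim: t P => [|x l IHl r IHr] P /=; first by [].
by case=> /IHl [h [Ph _]] _; exists h.
Qed.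

Lemma ub (d : nat) (t : ltree nat) : forall n (S : seq nat) (P : hclass nat),
  complete_depth t n -> shattered P t -> uniq S ->
  (forall h, P h -> (forall x, x \in S -> h x = false) /\
     exists D : seq nat, size D <= d /\ forall x, h x = false -> x \in D) ->
  n + size S <= d.
Proof.
elim: t => [|x l IHl r IHr] n S P /=.
- move=> -> [h Ph] uS /(_ h Ph) [HS [D [sD HD]]].
  rewrite add0n; apply: leq_trans sD; apply: uniq_leq_size => // y /HS; exact: HD.
- move=> [n' [-> [cl cr]]] [sl sr] uS HP.
  case xS: (x \in S).
    have [h [Ph hx]] := shat_ne sr.
    by have := (proj1 (HP h Ph)) x xS; rewrite hx.
  have := IHl n' (x :: S) _ cl sl.
  rewrite /= xS uS addnS addSn => -> //.
  move=> h [Ph hx]; have [HS HD] := HP h Ph; split => //.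
  by move=> y; rewrite in_cons => /orP [/eqP->|/HS].
Qed.

Fixpoint tr (j k : nat) : ltree nat :=
  match k with 0 => LLeaf _ | k'.+1 => LNode j (tr j.+1 k') (tr j.+1 k') end.

Lemma tr_depth k j : complete_depth (tr j k) k.
Proof. elim: k j => [|k IH] j //=; by exists k. Qed.

Lemma tr_shat k : forall j (P : hclass nat),
  (forall g : nat -> bool, exists h, P h /\ forall i, j <= i < j + k -> h i = g i) ->
  shattered P (tr j k).
Proof.
elim: k => [|k IH] j P HP /=.
  by have [h [Ph _]] := HP (fun _ => true); exists h.
split; apply: IH => g.
- have [h [Ph Hh]] := HP (fun i => if i == j then false else g i).
  exists h; split.
    split=> //; rewrite Hh ?eqxx //; rewrite leqnn /=; lia.
  move=> i /andP [a b]; rewrite Hh; last by apply/andP; split; lia.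
  by have -> : (i == j) = false by apply/eqP; lia.
- have [h [Ph Hh]] := HP (fun i => if i == j then true else g i).
  exists h; split.
    split=> //; rewrite Hh ?eqxx //; rewrite leqnn /=; lia.
  move=> i /andP [a b]; rewrite Hh; last by apply/andP; split; lia.
  by have -> : (i == j) = false by apply/eqP; lia.
Qed.

Lemma ldim_Cl d : Ldim (Cl (X:=nat) d) d.
Proof.
split.
  exists (tr 0 d); split; first exact: tr_depth.
  apply: tr_shat => g; exists (fun i => (d <= i) || g i); split; last first.
    by move=> i /andP [_ b]; rewrite leqNgt b.
  exists [seq i <- iota 0 d | ~~ g i]; split.
    by rewrite size_filter (leq_trans (count_size _ _)) // size_iota.
  move=> x; rewrite InE mem_filter mem_iota /= add0n.
  rewrite leqNgt; case: (x < d); case: (g x) => //=; split => //.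
move=> t d' ct st; have := ub ct st (S:=[::]) (erefl _).
rewrite addn0; apply => h [D [sD HD]]; split => //.
by exists D; split => // x /HD /InE.
Qed.

Definition nf (h : seq (round nat)) := count (fun r : round nat => ~~ r.2) h.
Definition advA (B : nat) : adversary nat :=
  Adversary (fun h : seq (round nat) => size h)
            (fun h x p => ~~ ((p == Some true) && (nf h < B))).

Section Play.
Variables (B : nat) (R : responder nat).
Notation pl n := (play (advA B) R n).

Lemma size_pl n : size (pl n) = n.
Proof. by elim: n => [|n IH] //=; rewrite size_rcons IH. Qed.

Lemma fst_pl n : map fst (labeled (pl n)) = iota 0 n.
Proof.
elim: n => [|n IH] //=; rewrite /labeled map_rcons map_rcons.
rewrite IH /= size_pl -cats1.
have -> : 0 :: iota 1 n = iota 0 (n + 1) by rewrite addn1.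
by rewrite iotaD.
Qed.

Lemma nf_pl n : nf (pl n) <= B.
Proof.
elim: n => [|n IH] //=; rewrite /nf -cats1 count_cat /= -/(nf _).
rewrite negbK; case: eqP => //= _; case: ltnP => /= H; lia.
Qed.

Lemma false_pl n : all (fun r : round nat => ~~ r.2 ==> (r.1.2 == Some true)) (pl n).
Proof.
elim: n => [|n IH] //=; rewrite all_rcons IH andbT /= negbK.
by apply/implyP => /andP [].
Qed.
End Play.

Lemma mist_cat (L : learner nat) s : forall past t,
  mistakes_aux L past (s ++ t) = mistakes_aux L past s + mistakes_aux L (past ++ s) t.
Proof.
elim: s => [|[x y] s IH] past t /=; first by rewrite cats0.
by rewrite IH -addnA cat_rcons.
Qed.

Lemma mist_pl B (L : learner nat) n :
  mistakes L (labeled (play (advA B) (learner_resp L) n)) =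
  count (fun r : round nat => is_mistake r.1.2 r.2) (play (advA B) (learner_resp L) n).
Proof.
elim: n => [|n IH] //=; rewrite /labeled map_rcons -!cats1 /mistakes mist_cat count_cat.
rewrite -/(labeled _) -/(mistakes _ _) IH /= addn0.
by [].
Qed.

Lemma struct_s (s : seq (nat * bool)) :
  map fst s = iota 0 (size s) ->
  s = [seq (i, (nth (0, true) s i).2) | i <- iota 0 (size s)].
Proof.
move=> Hs; apply: (eq_from_nth (x0 := (0, true))); first by rewrite size_map size_iota.
move=> i Hi; rewrite (nth_map 0) ?size_iota // nth_iota // add0n.
have := congr1 (fun q => nth 0 q i) Hs; rewrite (nth_map (0, true)) // nth_iota // add0n.
by case: (nth (0, true) s i) => a b /= ->.
Qed.

Lemma lbias_s (l d : nat) (s : seq (nat * bool)) :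
  map fst s = iota 0 (size s) -> count (fun p => ~~ p.2) s <= l + d ->
  lbias (Cl (X:=nat) d) l s.
Proof.
move=> Hs Hc.
set n := size s.
pose lab i := (nth (0, true) s i).2.
pose hh := fun x => if x < n then lab x else true.
pose F := [seq i <- iota 0 n | ~~ hh i].
have Es := struct_s Hs.
have sF : size F <= l + d.
  rewrite size_filter; apply: leq_trans Hc; rewrite [in X in _ <= X]Es count_map.
  rewrite leq_eqVlt; apply/orP; left; apply/eqP; apply: eq_in_count => i.
  by rewrite mem_iota /= add0n /hh => ->.
have uF : uniq F by rewrite filter_uniq // iota_uniq.
have Fx : forall x, (x \in F) = ~~ hh x.
  move=> x; rewrite mem_filter mem_iota /= add0n /hh.
  by case: (x < n); rewrite ?andbT ?andbF.
exists hh; split.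
  exists (fun x => x \notin take d F), (fun x => x \notin drop d F).
  split.
    exists (take d F); split; first by rewrite size_take; case: ltnP.
    by move=> x; rewrite InE; case: (x \in take d F); split.
  split.
    exists (drop d F); split; first by rewrite size_drop; lia.
    by move=> x; rewrite InE; case: (x \in drop d F); split.
  move=> x; rewrite /smul.
  have Hu := uF; rewrite -(cat_take_drop d F) cat_uniq in Hu.
  case/and3P: Hu => _ Hd _.
  have Fx' := Fx x; rewrite -(cat_take_drop d F) mem_cat in Fx'.
  move: Fx'; case e1: (x \in take d F); case e2: (x \in drop d F) => /=.
  - by move/hasPn: Hd => /(_ x e2); rewrite e1.
  - by case: (hh x).
  - by case: (hh x).
  - by case: (hh x).
move=> p /InE; rewrite Es => /mapP [i]; rewrite mem_iota add0n => /andP [_ Hi] -> /=.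
by rewrite /hh Hi.
Qed.

Lemma count_imp (T : Type) (a b : pred T) (s : seq T) :
  all (fun r => a r ==> b r) s -> count a s <= count b s.
Proof.
elim: s => [|x s IH] //= /andP [H /IH] Hs.
case: (a x) H => /= [->|_]; first by rewrite leq_add2l.
by rewrite add0n (leq_trans Hs) // leq_addl.
Qed.

Theorem mainTheorem2 (d : nat) :
  exists (X : Type) (H : hclass X),
    Ldim H d /\
    forall k l : nat, k < l + d ->
    forall m : nat,
      exists A : adversary X,
        (forall (R : responder X) (n : nat), lbias H l (labeled (play A R n))) /\
        (forall L : learner X, mistake_bounded H l k L ->
           exists n : nat, m < nontrivial_count (play A (learner_resp L) n)).
Proof.
exists nat, (Cl d); split; first exact: ldim_Cl.
move=> k l Hk m; exists (advA (l + d)).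
have LB : forall R n, lbias (Cl (X:=nat) d) l (labeled (play (advA (l + d)) R n)).
  move=> R n; apply: lbias_s.
    by rewrite fst_pl size_map size_pl.
  by rewrite count_map; exact: nf_pl.
split; first exact: LB.
move=> L HL; exists m.+1.
suff Hall : forall n, all (fun r : round nat => is_nontrivial r.1.2 r.2)
                          (play (advA (l + d)) (learner_resp L) n).
  by have := Hall m.+1; rewrite all_count => /eqP; rewrite /nontrivial_count => ->; rewrite size_pl.
elim=> [|n IH] //=; rewrite all_rcons IH andbT /=.
set h := play (advA (l + d)) (learner_resp L) n.
rewrite /is_nontrivial /is_mistake.
case E: (learner_resp L h (size h)) => [[]|] //=.
rewrite negbK.
case: ltnP => //= Hnf; exfalso.
have := HL _ (LB (learner_resp L) n); rewrite mist_pl -/h.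
apply/negP; rewrite -ltnNge; apply: (leq_trans Hk); apply: (leq_trans Hnf).
apply: count_imp; have := false_pl (l + d) (learner_resp L) n.
apply: sub_all => r /=; case: (r.2) => //=.

Qed.
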